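(* Let $D\subset\mathbb N^n$ be finite, not contained in any coordinate hyperplane, $p$ a prime, and $U\in E_{D,p}(r)$ a minimal solution. Then $\mathrm{Im}\,\varphi_U\subset\Sigma_p(D)$.
   Context: $s_p$ = base-$p$ digit sum. $E_{D,p}(r)$ = set of $U=(u_{\mathbf d})\in\{0,\dots,p^r-1\}^D$ with $\sum u_{\mathbf d}\mathbf d\equiv0\pmod{p^r-1}$ and all coordinates of $\sum u_{\mathbf d}\mathbf d$ positive; $s_p(U)=\sum s_p(u_{\mathbf d})$; $\delta_p(D)=\frac1{p-1}\min_{r\ge1}\min_{U\in E_{D,p}(r)}s_p(U)/r$; $U\in E_{D,p}(r)$ is minimal if $s_p(U)=(p-1)r\delta_p(D)$. Shift $\delta_r$: $k\mapsto pk\bmod(p^r-1)$ for $k\le p^r-2$, $p^r-1\mapsto p^r-1$, coordinatewise. $\varphi_U(k)=\frac1{p^r-1}\sum\mathbf d(\delta_r^kU)_{\mathbf d}$ for $k\in\mathbb Z/r\mathbb Z$; $U$ irreducible if $\varphi_U$ injective; $MI_{D,p}$ = set of minimal irreducible elements of all lengths; $\Sigma_p(D)=\bigcup_{U\in MI_{D,p}}\mathrm{Im}\varphi_U$. *)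

(* Defs.v *)
From mathcomp Require Import all_boot all_order finmap.
Set Implicit Arguments. Unset Strict Implicit. Unset Printing Implicit Defensive.
Local Open Scope fset_scope.

(* base-p digit sum: sum of the base-p digits (m %/ p^i) %% p of m
   (all digits of index > m vanish since m < p^(m+1) for p >= 2). *)
Definition sp (p m : nat) : nat := \sum_(i < m.+1) (m %/ p ^ i) %% p.

Section Defs.
Variables (n : nat) (D : {fset (n.-tuple nat)}) (p : nat).

Definition vecsum (U : {ffun D -> nat}) (i : 'I_n) : nat :=
  \sum_(d : D) U d * tnth (fsval d) i.

Definition inE (r : nat) (U : {ffun D -> nat}) : Prop :=
  0 < r /\
  (forall d : D, U d < p ^ r) /\
  (forall i : 'I_n, vecsum U i %% (p ^ r - 1) = 0) /\
  (forall i : 'I_n, 0 < vecsum U i).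

Definition spU (U : {ffun D -> nat}) : nat := \sum_(d : D) sp p (U d).

(* U minimal: U \in E(r) and s_p(U)/r attains the minimum over all
   r' >= 1, U' \in E(r') of s_p(U')/r'  (i.e. s_p(U) = (p-1) r delta_p(D)). *)
Definition minimal (r : nat) (U : {ffun D -> nat}) : Prop :=
  inE r U /\
  forall (r' : nat) (U' : {ffun D -> nat}), inE r' U' -> spU U * r' <= spU U' * r.

Definition shift (r k : nat) : nat :=
  if k == p ^ r - 1 then k else (p * k) %% (p ^ r - 1).

Definition shiftU (r : nat) (U : {ffun D -> nat}) : {ffun D -> nat} :=
  [ffun d => shift r (U d)].

(* varphi_U(k) = (1/(p^r-1)) sum_d d (delta_r^k U)_d, for k in Z/rZ
   (represented by 'I_r, since delta_r^r = id); the division is exact on E. *)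
Definition phi (r : nat) (U : {ffun D -> nat}) (k : 'I_r) : n.-tuple nat :=
  [tuple vecsum (iter k (shiftU r) U) i %/ (p ^ r - 1) | i < n].

Definition irreducible (r : nat) (U : {ffun D -> nat}) : Prop :=
  injective (@phi r U).

Definition minimal_irreducible (r : nat) (U : {ffun D -> nat}) : Prop :=
  minimal r U /\ irreducible r U.

Definition inSigma (v : n.-tuple nat) : Prop :=
  exists (r : nat) (U : {ffun D -> nat}) (k : 'I_r),
    minimal_irreducible r U /\ @phi r U k = v.

End Defs.
Arguments phi {n D} p r U k.
Arguments minimal {n D} p r U.
Arguments inSigma {n} D p v.

(* Main.v *)
Require Import Defs.
From mathcomp Require Import all_boot all_order finmap zify.
Local Open Scope fset_scope.
Local Open Scope nat_scope.
Set Implicit Arguments.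

Fixpoint vL {n} {D : {fset (n.-tuple nat)}} (p : nat) (L : seq {ffun D -> nat}) (d : D) : nat :=
  if L is x :: L0 then x d * p ^ size L0 + vL p L0 d else 0.
Definition VL {n} {D : {fset (n.-tuple nat)}} p (L : seq {ffun D -> nat}) : {ffun D -> nat} :=
  [ffun d => vL p L d].
Definition cw {n} {D : {fset (n.-tuple nat)}} (x : {ffun D -> nat}) (i : 'I_n) : nat :=
  \sum_(d : D) x d * tnth (fsval d) i.
Fixpoint Vi {n} {D : {fset (n.-tuple nat)}} p (L : seq {ffun D -> nat}) (i : 'I_n) : nat :=
  if L is x :: L0 then cw x i * p ^ size L0 + Vi p L0 i else 0.
Definition ws {n} {D : {fset (n.-tuple nat)}} (L : seq {ffun D -> nat}) : nat :=
  \sum_(x <- L) \sum_(d : D) x d.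
Fixpoint Fr {n} {D : {fset (n.-tuple nat)}} p (i : 'I_n) (y : nat) (L : seq {ffun D -> nat}) : nat :=
  if L is x :: L0 then Fr p i (p * y - cw x i) L0 else y.
Fixpoint digs {n} {D : {fset (n.-tuple nat)}} p (m : nat) (u : {ffun D -> nat}) : seq {ffun D -> nat} :=
  if m is m'.+1 then [ffun d => (u d %/ p ^ m') %% p] :: digs p m' [ffun d => u d %% p ^ m'] else [::].
Definition bnd {n} {D : {fset (n.-tuple nat)}} p (L : seq {ffun D -> nat}) :=
  forall x, x \in L -> forall d, x d < p.

Lemma vL_cat n (D : {fset (n.-tuple nat)}) p (A B : seq {ffun D -> nat}) d :
  vL p (A ++ B) d = vL p A d * p ^ size B + vL p B d.
Proof.
elim: A => [|x A IH] //=; rewrite IH size_cat expnD.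
set P := p ^ size A; set Q := p ^ size B. nia.
Qed.

Lemma Vi_cat n (D : {fset (n.-tuple nat)}) p (A B : seq {ffun D -> nat}) i :
  Vi p (A ++ B) i = Vi p A i * p ^ size B + Vi p B i.
Proof.
elim: A => [|x A IH] //=; rewrite IH size_cat expnD.
set P := p ^ size A; set Q := p ^ size B. nia.
Qed.

Lemma vecsum_VL n (D : {fset (n.-tuple nat)}) p (L : seq {ffun D -> nat}) i :
  vecsum (VL p L) i = Vi p L i.
Proof.
rewrite /vecsum; elim: L => [|x L IH] /=.
  by apply: big1 => d _; rewrite ffunE.
rewrite -IH /cw big_distrl -big_split /=; apply: eq_bigr => d _.
rewrite !ffunE /=; nia.
Qed.

Lemma bnd_cons n (D : {fset (n.-tuple nat)}) p x (L : seq {ffun D -> nat}) :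
  bnd p (x :: L) -> (forall d, x d < p) /\ bnd p L.
Proof.
move=> H; split; first by apply: H; rewrite inE eqxx.
by move=> y Hy; apply: H; rewrite inE Hy orbT.
Qed.

Lemma vL_lt n (D : {fset (n.-tuple nat)}) p (L : seq {ffun D -> nat}) d :
  bnd p L -> vL p L d < p ^ size L.
Proof.
elim: L => [|x L IH] /=; first by rewrite expn0.
move=> /bnd_cons [Hx HL]; have := IH HL; have := Hx d; rewrite expnS.
set P := p ^ size L; move=> *; nia.
Qed.

Lemma sp_ext p u N : 1 < p -> u < N -> sp p u = \sum_(i < N) (u %/ p ^ i) %% p.
Proof.
move=> p1 uN; rewrite /sp -(big_mkord xpredT (fun i => (u %/ p ^ i) %% p)).
rewrite -(big_mkord xpredT (fun i => (u %/ p ^ i) %% p)).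
rewrite [RHS](big_cat_nat _ (n := u.+1)) //=.
rewrite [X in _ = _ + X]big1_seq ?addn0 //.
move=> i /andP[_]; rewrite mem_index_iota => /andP[hi _].
rewrite divn_small ?mod0n //; apply: leq_trans hi _.
by apply: ltnW; apply: ltn_expl.
Qed.

Lemma sp0 p : sp p 0 = 0.
Proof. by rewrite /sp big1 // => i _; rewrite div0n mod0n. Qed.

Lemma sp_rec p u : 1 < p -> sp p u = u %% p + sp p (u %/ p).
Proof.
move=> p1; rewrite (sp_ext p u u.+2) // big_ord_recl /= expn0 divn1.
rewrite (sp_ext p (u %/ p) u.+1 p1); last by rewrite ltnS leq_div.
congr (_ + _); apply: eq_bigr => i _.
by rewrite /bump /= add1n expnS divnMA.
Qed.

Lemma sp_digit p m x v : 1 < p -> x < p -> v < p ^ m -> sp p (x * p ^ m + v) = x + sp p v.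
Proof.
move=> p1 xp; elim: m v => [|m IH] v.
  rewrite expn0 ltnS leqn0 => /eqP ->; rewrite muln1 addn0 sp_rec // divn_small //.
  by rewrite modn_small // sp0.
move=> vlt; rewrite (sp_rec p) // (sp_rec p v) //.
have -> : x * p ^ m.+1 + v = (x * p ^ m) * p + v by rewrite expnS; nia.
rewrite modnMDl divnMDl ?(ltnW p1) // IH; last by rewrite ltn_divLR ?(ltnW p1) // -expnSr.
nia.
Qed.

Lemma spU_VL n (D : {fset (n.-tuple nat)}) p (L : seq {ffun D -> nat}) :
  1 < p -> bnd p L -> spU p (VL p L) = ws L.
Proof.
move=> p1; rewrite /spU /ws; elim: L => [|x L IH] /=.
  by move=> _; rewrite big_nil; apply: big1 => d _; rewrite ffunE sp0.
move=> /bnd_cons [Hx HL]; rewrite big_cons -IH // -big_split /=.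
apply: eq_bigr => d _; rewrite !ffunE /= sp_digit //; exact: vL_lt.
Qed.

Lemma size_digs n (D : {fset (n.-tuple nat)}) p m (u : {ffun D -> nat}) : size (digs p m u) = m.
Proof. by elim: m u => [|m IH] u //=; rewrite IH. Qed.

Lemma bnd_digs n (D : {fset (n.-tuple nat)}) p m (u : {ffun D -> nat}) : 0 < p -> bnd p (digs p m u).
Proof.
move=> p0; elim: m u => [|m IH] u x //=.
rewrite inE => /orP [/eqP -> d|]; first by rewrite ffunE ltn_pmod.
exact: IH.
Qed.

Lemma vL_digs n (D : {fset (n.-tuple nat)}) p m (u : {ffun D -> nat}) d : 0 < p ->
  vL p (digs p m u) d = u d %% p ^ m.
Proof.
move=> p0; elim: m u => [|m IH] u /=; first by rewrite expn0 modn1.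
rewrite IH !ffunE modn_mod size_digs.
set P := p ^ m; set v := u d.
have P0 : 0 < P by rewrite expn_gt0 p0.
have e : v = (v %/ P %/ p) * (P * p) + ((v %/ P) %% p * P + v %% P).
  rewrite {1}(divn_eq v P) {1}(divn_eq (v %/ P) p); nia.
rewrite expnSr -/P; apply/esym; rewrite {1}e modnMDl modn_small //.
have := ltn_pmod (v %/ P) p0; have := ltn_pmod v P0.
move: (v %/ P %% p) (v %% P) => a b ha hb.
have : a * P <= (p - 1) * P by apply: leq_mul => //; lia.
rewrite mulnBl mul1n mulnC => h1.
have : P <= P * p by rewrite leq_pmulr // ltnW.
lia.
Qed.

Lemma rot_max p P X w : 1 < p -> 0 < P -> X < p -> w < P -> w * p + X = p * P - 1 -> X * P + w = p * P - 1.
Proof. move=> *. nia. Qed.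

Lemma shift_arith p P X w : 1 < p -> 0 < P -> X < p -> w < P ->
  (if X * P + w == p * P - 1 then X * P + w else (p * (X * P + w)) %% (p * P - 1)) = w * p + X.
Proof.
move=> p1 P0 Xp wP; case: eqP => e; first nia.
have -> : p * (X * P + w) = X * (p * P - 1) + (w * p + X) by nia.
rewrite modnMDl modn_small //.
have : w * p + X <= p * P - 1 by nia.
rewrite leq_eqVlt => /orP [/eqP h|//]; exfalso; apply: e; exact: rot_max.
Qed.

Lemma shiftU_rot1 n (D : {fset (n.-tuple nat)}) p (M : seq {ffun D -> nat}) :
  1 < p -> bnd p M -> 0 < size M -> shiftU p (size M) (VL p M) = VL p (rot 1 M).
Proof.
case: M => [|x M0] // p1 Hb _; apply/ffunP => d.
rewrite !ffunE /= rot1_cons -cats1 vL_cat /= /shift expn1 expn0 expnS muln1 addn0.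
have [Hx HL] := bnd_cons Hb.
apply: shift_arith => //; [by rewrite expn_gt0 ltnW | exact: vL_lt].
Qed.

Lemma bnd_rot n (D : {fset (n.-tuple nat)}) p k (M : seq {ffun D -> nat}) : bnd p M -> bnd p (rot k M).
Proof. by move=> H x; rewrite mem_rot; apply: H. Qed.

Lemma iter_shift n (D : {fset (n.-tuple nat)}) p (M : seq {ffun D -> nat}) k :
  1 < p -> bnd p M -> 0 < size M -> k <= size M ->
  iter k (shiftU p (size M)) (VL p M) = VL p (rot k M).
Proof.
move=> p1 Hb Hs; elim: k => [|k IH] hk; first by rewrite rot0.
rewrite iterS IH ?(ltnW hk) //.
have := shiftU_rot1 p1 (@bnd_rot _ _ p k M Hb); rewrite size_rot => -> //.
by rewrite -rotD ?add1n.
Qed.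

Lemma phi_VL n (D : {fset (n.-tuple nat)}) p (M : seq {ffun D -> nat}) r (k : 'I_r) :
  1 < p -> bnd p M -> size M = r ->
  phi p r (VL p M) k = [tuple Vi p (rot k M) i %/ (p ^ r - 1) | i < n].
Proof.
move=> p1 Hb Hr; subst r; apply: eq_from_tnth => i.
rewrite !tnth_mktuple iter_shift ?vecsum_VL //; last exact: ltnW.
by case: k => k /= hk; apply: leq_ltn_trans hk.
Qed.

Lemma step_arith p P c V0 y : 0 < p * P -> c * P + V0 = y * (p * P - 1) -> V0 * p + c = (p * y - c) * (p * P - 1).
Proof.
move=> pP h; rewrite mulnBl.
have -> : p * y * (p * P - 1) = c * (p * P - 1) + (V0 * p + c).
  have : p * (c * P + V0) = p * (y * (p * P - 1)) by rewrite h.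
  nia.
by rewrite addKn.
Qed.

Lemma rotF n (D : {fset (n.-tuple nat)}) p (i : 'I_n) t (M : seq {ffun D -> nat}) y :
  0 < p -> t <= size M -> 0 < size M -> Vi p M i = y * (p ^ size M - 1) ->
  Vi p (rot t M) i = Fr p i y (take t M) * (p ^ size M - 1).
Proof.
move=> p0; elim: t M y => [|t IH] M y ht hs hV; first by rewrite rot0 take0.
case: M ht hs hV => [|x M0] //= ht _ hV.
rewrite rotS // rot_rot rot1_cons.
have -> : (size M0).+1 = size (rcons M0 x) by rewrite size_rcons.
rewrite (IH _ (p * y - cw x i)) ?size_rcons //.
  by rewrite -cats1 takel_cat.
  exact: ltnW.
rewrite -cats1 Vi_cat /= expn1 expn0 muln1 addn0.
rewrite expnS.
apply: step_arith; last by rewrite -expnS.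
by rewrite -expnS expn_gt0 p0.
Qed.

Lemma Vi_pos n (D : {fset (n.-tuple nat)}) p (M : seq {ffun D -> nat}) i :
  0 < p -> (0 < Vi p M i) = has (fun x => 0 < cw x i) M.
Proof.
move=> p0; elim: M => [|x M IH] //=.
by rewrite addn_gt0 muln_gt0 expn_gt0 p0 andbT IH.
Qed.

Lemma ws_rot n (D : {fset (n.-tuple nat)}) k (M : seq {ffun D -> nat}) : ws (rot k M) = ws M.
Proof. by rewrite /ws; apply: perm_big; rewrite perm_rot. Qed.

Lemma ws_cat n (D : {fset (n.-tuple nat)}) (A B : seq {ffun D -> nat}) : ws (A ++ B) = ws A + ws B.
Proof. by rewrite /ws big_cat. Qed.

Lemma pow_gt1 p r : 1 < p -> 0 < r -> 1 < p ^ r.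
Proof. by move=> p1 r0; rewrite -{1}(expn0 p) ltn_exp2l. Qed.

Lemma split_arith P Q VA VB x : 1 < P -> 1 < Q -> VA * Q + VB = x * (P * Q - 1) ->
  VB * P + VA = x * (P * Q - 1) -> VA = x * (P - 1).
Proof. move=> *; nia. Qed.

Lemma piece_min n (D : {fset (n.-tuple nat)}) p r (U : {ffun D -> nat}) a (V : {ffun D -> nat}) b (W : {ffun D -> nat}) :
  minimal p r U -> Defs.inE p a V -> Defs.inE p b W -> spU p V + spU p W = spU p U -> a + b = r ->
  minimal p a V.
Proof.
move=> [hU hm] hV hW hs hr; split => // r' U' h.
have h1 := hm a V hV; have h2 := hm b W hW; have h3 := hm r' U' h.
have r0 : 0 < r by case: hU.
move: (spU p V) (spU p W) (spU p U) (spU p U') hs h1 h2 h3 => sA sB s s' hs h1 h2 h3.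
have e : sA * r = s * a by nia.
rewrite -(leq_pmul2r r0) -mulnA mulnCA e mulnCA.
have := leq_mul (leqnn a) h3; nia.
Qed.

Lemma piece_phi n (D : {fset (n.-tuple nat)}) p (M C E : seq {ffun D -> nat}) (x : 'I_n -> nat) m c t :
  1 < p -> M = C ++ E -> size M = m -> size C = c -> 0 < c ->
  (forall i, Vi p M i = x i * (p ^ m - 1)) -> (forall i, Vi p C i = x i * (p ^ c - 1)) -> t < c ->
  [tuple Vi p (rot t M) i %/ (p ^ m - 1) | i < n] = [tuple Vi p (rot t C) i %/ (p ^ c - 1) | i < n].
Proof.
move=> p1 hM hm hc c0 hxM hxC tc; apply: eq_from_tnth => i; rewrite !tnth_mktuple.
have cm : c <= m by rewrite -hm -hc hM size_cat leq_addr.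
have p0 : 0 < p by apply: ltnW.
rewrite (@rotF _ _ p i t M (x i)) ?hm //; first last.
- by apply: leq_trans cm.
- by apply: leq_trans cm; apply: ltnW.
rewrite (@rotF _ _ p i t C (x i)) ?hc //; last by apply: ltnW.
rewrite hM takel_cat; last by rewrite hc ltnW.
rewrite !mulnK // subn_gt0 pow_gt1 //; exact: leq_trans cm.
Qed.

Lemma core n (D : {fset (n.-tuple nat)}) p r (U : {ffun D -> nat}) (k1 k2 : 'I_r) :
  1 < p ->
  (forall r', r' < r -> forall U' : {ffun D -> nat}, minimal p r' U' -> forall k : 'I_r', inSigma D p (phi p r' U' k)) ->
  minimal p r U -> k1 < k2 -> phi p r U k1 = phi p r U k2 ->
  forall k : 'I_r, inSigma D p (phi p r U k).
Proof.
move=> p1 IH Hmin hlt heq k.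
have p0 : 0 < p by apply: ltnW.
have [[r0 [Ubnd [Udiv Upos]]] _] := Hmin.
set L := digs p r U.
have HLb : bnd p L by apply: bnd_digs.
have HLs : size L = r by rewrite size_digs.
have HU : U = VL p L.
  by apply/ffunP => d; rewrite ffunE vL_digs // modn_small.
set Q := p ^ r - 1.
have Q0 : 0 < Q by rewrite subn_gt0 pow_gt1.
have hy : forall i, Vi p L i = (Vi p L i %/ Q) * Q.
  by move=> i; rewrite divnK // -vecsum_VL -HU /dvdn Udiv.
have hrot : forall t, t <= r -> forall i, Vi p (rot t L) i = Fr p i (Vi p L i %/ Q) (take t L) * Q.
  move=> t ht i; rewrite (@rotF _ _ p i t L (Vi p L i %/ Q)) ?HLs //; exact: hy.
have hphi : forall t : 'I_r, phi p r U t = [tuple Vi p (rot t L) i %/ Q | i < n].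
  by move=> t; rewrite {1}HU phi_VL.
have k2r : k2 < r by [].
set a := k2 - k1.
set b := r - a.
have a0 : 0 < a by rewrite subn_gt0.
have ar : a < r by apply: leq_ltn_trans k2r; apply: leq_subr.
have b0 : 0 < b by rewrite subn_gt0.
have ab : a + b = r by rewrite subnKC // ltnW.
set L' := rot k1 L.
set A := take a L'.
set B := drop a L'.
have HL's : size L' = r by rewrite size_rot.
have HAs : size A = a by rewrite size_takel // HL's ltnW.
have HBs : size B = b by rewrite size_drop HL's.
have HAB : L' = A ++ B by rewrite cat_take_drop.
set x := fun i => Fr p i (Vi p L i %/ Q) (take k1 L).
have hL' : forall i, Vi p L' i = x i * Q by move=> i; rewrite /L' hrot // ltnW.
have ak : a + k1 = k2 by rewrite /a subnK // ltnW.
have eBA : B ++ A = rot k2 L.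
  have -> : rot k2 L = rot a L' by rewrite /L' -rotD ak // HLs ltnW.
  by rewrite HAB -HAs rot_size_cat.
have hBA : forall i, Vi p (B ++ A) i = x i * Q.
  move=> i; rewrite eBA (hrot k2 (ltnW k2r)).
  have := congr1 (fun t => tnth t i) heq; rewrite !hphi !tnth_mktuple.
  rewrite (hrot k1 (ltnW (ltn_ord k1))) (hrot k2 (ltnW k2r)) !mulnK // => <-.
  by [].
have Pr : p ^ r = p ^ a * p ^ b by rewrite -expnD ab.
have hA : forall i, Vi p A i = x i * (p ^ a - 1).
  move=> i; apply: (@split_arith _ (p ^ b) _ (Vi p B i)); rewrite ?pow_gt1 //.
    by rewrite -Pr -/Q -hL' HAB Vi_cat HBs.
  by rewrite -Pr -/Q -hBA Vi_cat HAs.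
have hB : forall i, Vi p B i = x i * (p ^ b - 1).
  move=> i; apply: (@split_arith _ (p ^ a) _ (Vi p A i)); rewrite ?pow_gt1 //.
    by rewrite [p ^ b * _]mulnC -Pr -/Q -hBA Vi_cat HAs.
  by rewrite [p ^ b * _]mulnC -Pr -/Q -hL' HAB Vi_cat HBs.
have xpos : forall i, 0 < x i.
  move=> i; have : 0 < Vi p L' i.
    rewrite (@Vi_pos _ _ p L' i p0) has_rot -(@Vi_pos _ _ p L i p0) -vecsum_VL -HU; exact: Upos.
  by rewrite hL' muln_gt0 => /andP [].
have bndA : bnd p A by move=> z /mem_take; apply: bnd_rot.
have bndB : bnd p B by move=> z /mem_drop; apply: bnd_rot.
have inA : Defs.inE p a (VL p A).
  split=> //; split; first by move=> d; rewrite ffunE -HAs; apply: vL_lt.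
  split=> i; rewrite vecsum_VL hA; first by rewrite modnMl.
  by rewrite muln_gt0 xpos subn_gt0 pow_gt1.
have inB : Defs.inE p b (VL p B).
  split=> //; split; first by move=> d; rewrite ffunE -HBs; apply: vL_lt.
  split=> i; rewrite vecsum_VL hB; first by rewrite modnMl.
  by rewrite muln_gt0 xpos subn_gt0 pow_gt1.
have hs : spU p (VL p A) + spU p (VL p B) = spU p U.
  by rewrite !spU_VL // -ws_cat -HAB ws_rot HU spU_VL.
have minA := piece_min Hmin inA inB hs ab.
have minB : minimal p b (VL p B) by apply: (piece_min Hmin inB inA); rewrite 1?addnC.
have [hk|hk] := boolP ((k1 <= k) && (k < k2)).
  have ht : k - k1 < a.
    case/andP: hk => h1 h2; rewrite /a; lia.
  have := IH a ar (VL p A) minA (Ordinal ht).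
  rewrite phi_VL // hphi.
  case/andP: hk => h1 h2.
  suff -> : [tuple Vi p (rot k L) i %/ Q | i < n] =
     [tuple Vi p (rot (k - k1) L') i %/ (p ^ r - 1) | i < n].
    by rewrite (@piece_phi _ _ p L' A B x r a (k - k1) p1 HAB HL's HAs a0 hL' hA ht).
  by rewrite /L' -rotD subnK // HLs ltnW.
set t := if k2 <= k then k - k2 else k + (r - k2).
have ht : t < b.
  have kr := ltn_ord k; move: hk; rewrite negb_and -ltnNge -leqNgt => hk.
  rewrite /t /b /a; case: ifP => h; lia.
have hkt : rot k L = rot t (B ++ A).
  have kr := ltn_ord k.
  rewrite eBA /t; case: ifP => h.
    rewrite -rotD; last by rewrite HLs; clear -h kr; lia.
    by rewrite subnK.
  have kk2 : k < k2 by rewrite ltnNge h.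
  rewrite rotD; last by rewrite size_rot HLs; clear -kk2 k2r; lia.
  rewrite -[rot (r - k2) _]rotD; last by rewrite HLs; clear -kk2 k2r; lia.
  have rL : rot r L = L by rewrite -{1}HLs rot_size.
  by rewrite subnK ?rL // ltnW.
have br : b < r by rewrite /b ltn_subrL a0 r0.
have := IH b br (VL p B) minB (Ordinal ht).
rewrite phi_VL // hphi /= hkt.
have HBA : size (B ++ A) = r by rewrite size_cat HBs HAs addnC.
by rewrite (@piece_phi _ _ p (B ++ A) B A x r b t p1 erefl HBA HBs b0 hBA hB ht).
Qed.

Lemma main_ind n (D : {fset (n.-tuple nat)}) p : 1 < p ->
  forall r (U : {ffun D -> nat}), minimal p r U -> forall k : 'I_r, inSigma D p (phi p r U k).
Proof.
move=> p1 r; elim/ltn_ind: r => r IH U Hmin.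
have [Hinj|Hn] := boolP (injectiveb (phi p r U)).
  by move=> k; exists r, U, k; split=> //; split=> //; apply/injectiveP.
case/injectivePn: Hn => k1 [k2 hne heq].
case: (ltngtP k1 k2) => h.
- exact: (core p1 IH Hmin h heq).
- exact: (core p1 IH Hmin h (esym heq)).
- by move/val_inj: h hne => ->; rewrite eqxx.
Qed.

Unset Implicit Arguments.

Theorem lemma2p11 (n : nat) (D : {fset (n.-tuple nat)}) (p r : nat)
  (U : {ffun D -> nat}) :
  (forall i : 'I_n, exists2 d, d \in D & tnth d i != 0) ->
  prime p ->
  minimal p r U ->
  forall k : 'I_r, inSigma D p (phi p r U k).
Proof.
move=> _ pr; apply: main_ind; exact: prime_gt1.
Qed.
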